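(* Let $\xi$ be a pure-like mixture (as defined in the context, in particular not of the form $x^p$). Then for sufficiently small $\varepsilon>0$ there exists a constant $\alpha>0$ such that $$F(x,y)<0\quad\text{for all }x\in(-E_0-\varepsilon,-E_0+\varepsilon),\ y\in\mathbb R\setminus(-y_0-\alpha\sqrt\varepsilon,-y_0+\alpha\sqrt\varepsilon),$$ and there exists a constant $\beta>0$ such that $$F(x,y)<\beta\sqrt\varepsilon\quad\text{for all }x\in(-E_0-\varepsilon,-E_0+\varepsilon),\ y\in(-y_0-\alpha\sqrt\varepsilon,-y_0+\alpha\sqrt\varepsilon).$$
   Context: $\xi(x)=\sum_{p\ge2}\gamma_p^2x^p$ with deterministic $\gamma_p$, $\sum_{p\ge2}2^p\gamma_p^2<\infty$ and $\xi(1)=1$; write $\xi'=\xi'(1)$, $\xi''=\xi''(1)$. $\xi$ is called pure-like if $G:=\log\frac{\xi''}{\xi'}-\frac{(\xi''-\xi')(\xi''-\xi'+\xi'^2)}{\xi''\xi'^2}>0$; here it is also assumed that $\xi$ is a genuine mixture (not $x^p$), so that $\xi''+\xi'-\xi'^2>0$. Let $\sigma_{\mathrm{sc}}$ be the standard semicircle law (density $\frac1{2\pi}\sqrt{4-t^2}$ on $[-2,2]$) and $\Psi_*(x)=\int\log|x-t|\,\sigma_{\mathrm{sc}}(dt)$, i.e. $\Psi_*(x)=\frac{x^2}4-\frac12$ for $|x|\le2$ and $\Psi_*(x)=\frac{x^2}4-\frac12-\big[\frac{|x|}4\sqrt{x^2-4}-\log(\sqrt{x^2/4-1}+|x|/2)\big]$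 for $|x|>2$. Define $$F(x,y)=\tfrac12+\tfrac12\log\tfrac{\xi''}{\xi'}-\tfrac{x^2}2-\frac{(y-\xi'x)^2}{2(\xi''+\xi'-\xi'^2)}+\Psi_*\Big(\frac{y}{\sqrt{\xi''}}\Big).$$ Let $-E_0=\min\{x:\sup_{y\in\mathbb R}F(x,y)=0\}$ and let $-y_0$ be the maximizer of $y\mapsto F(-E_0,y)$ (which for pure-like $\xi$ is unique and satisfies $-y_0<-2\sqrt{\xi''}$). *)

(* Defs.v *)
From Stdlib Require Import Reals Lra.
From Coquelicot Require Import Coquelicot.
Open Scope R_scope.

Definition xi_coef (gamma : nat -> R) (p : nat) : R := (gamma p) ^ 2.

Definition xi (gamma : nat -> R) (x : R) : R := PSeries (xi_coef gamma) x.

Definition xi1 (gamma : nat -> R) : R := Derive (xi gamma) 1.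
Definition xi2 (gamma : nat -> R) : R := Derive (Derive (xi gamma)) 1.

Definition admissible_mixture (gamma : nat -> R) : Prop :=
  gamma 0%nat = 0 /\ gamma 1%nat = 0 /\
  ex_series (fun p => 2 ^ p * (gamma p) ^ 2) /\
  xi gamma 1 = 1.

Definition genuine_mixture (gamma : nat -> R) : Prop :=
  ~ (exists p : nat, forall x : R, xi gamma x = x ^ p).

Definition G_const (gamma : nat -> R) : R :=
  let a := xi1 gamma in let b := xi2 gamma in
  ln (b / a) - (b - a) * (b - a + a ^ 2) / (b * a ^ 2).

Definition pure_like (gamma : nat -> R) : Prop := G_const gamma > 0.

(* Psi_*(x) = int log|x-t| sigma_sc(dt), explicit formula *)
Definition Psi_star (x : R) : R :=
  if Rle_dec (Rabs x) 2 then x ^ 2 / 4 - 1 / 2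
  else x ^ 2 / 4 - 1 / 2
       - (Rabs x / 4 * sqrt (x ^ 2 - 4) - ln (sqrt (x ^ 2 / 4 - 1) + Rabs x / 2)).

Definition F (gamma : nat -> R) (x y : R) : R :=
  let a := xi1 gamma in let b := xi2 gamma in
  1 / 2 + 1 / 2 * ln (b / a) - x ^ 2 / 2
  - (y - a * x) ^ 2 / (2 * (b + a - a ^ 2))
  + Psi_star (y / sqrt b).

Definition supF_eq0 (gamma : nat -> R) (x : R) : Prop :=
  is_lub (fun v => exists y, v = F gamma x y) 0.

Definition is_E0 (gamma : nat -> R) (E0 : R) : Prop :=
  supF_eq0 gamma (- E0) /\ (forall x, supF_eq0 gamma x -> - E0 <= x).

Definition is_y0 (gamma : nat -> R) (E0 y0 : R) : Prop :=
  forall y, F gamma (- E0) y <= F gamma (- E0) (- y0).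

(* Main.v *)
Require Import Defs.
From Stdlib Require Import Reals Lra.
From Coquelicot Require Import Coquelicot.
Open Scope R_scope.

Lemma sum_n_nonneg_ge (u : nat -> R) : (forall n, 0 <= u n) ->
  forall n, 0 <= sum_n u n /\ u n <= sum_n u n.
Proof.
  intros H n. induction n as [|n IH].
  - rewrite sum_O. split; [apply H| lra].
  - rewrite sum_Sn. unfold plus; simpl. specialize (H (S n)). lra.
Qed.

Lemma radius_gt1 (gamma : nat -> R) : admissible_mixture gamma ->
  Rbar_lt (Rabs 1) (CV_radius (xi_coef gamma)).
Proof.
  intros (_ & _ & [l Hl] & _).
  assert (H2 : Rbar_le 2 (CV_radius (xi_coef gamma))).
  { destruct (CV_radius_bounded (xi_coef gamma)) as [Hub _].
    apply Hub. exists l. intros n.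
    assert (Hnn : forall k, 0 <= 2 ^ k * gamma k ^ 2).
    { intros k. apply Rmult_le_pos. apply pow_le; lra. apply pow2_ge_0. }
    destruct (sum_n_nonneg_ge _ Hnn n) as [_ Hle].
    assert (Hc := is_lim_seq_incr_compare (sum_n (fun k => 2 ^ k * gamma k ^ 2)) l Hl).
    unfold xi_coef. rewrite Rabs_right.
    2:{ rewrite Rmult_comm. apply Rle_ge, Hnn. }
    rewrite Rmult_comm. eapply Rle_trans. apply Hle. apply Hc.
    intros k. rewrite sum_Sn. assert (E: forall x y:R, plus x y = x + y) by reflexivity. rewrite E. specialize (Hnn (S k)). lra. }
  rewrite Rabs_R1. destruct (CV_radius (xi_coef gamma)); simpl in *; try lra; auto; contradiction.
Qed.

Lemma xi2_nonneg (gamma : nat -> R) : admissible_mixture gamma -> 0 <= xi2 gamma.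
Proof.
  intros Hadm. pose proof (radius_gt1 gamma Hadm) as Hr.
  unfold xi2, xi.
  assert (E := Derive_n_PSeries 2 (xi_coef gamma) 1 Hr). simpl in E.
  assert (E2 : Derive (Derive (fun x => PSeries (xi_coef gamma) x)) 1 = PSeries (PS_derive_n 2 (xi_coef gamma)) 1) by (rewrite <- E; reflexivity).
  rewrite E2.
  rewrite PSeries_1.
  assert (Hnn : forall k, 0 <= PS_derive_n 2 (xi_coef gamma) k).
  { intros k. unfold PS_derive_n, xi_coef. apply Rmult_le_pos.
    apply Rmult_le_pos. apply pos_INR. apply Rlt_le, Rinv_0_lt_compat, lt_0_INR, Factorial.lt_O_fact.
    apply pow2_ge_0. }
  assert (Hex : ex_series (PS_derive_n 2 (xi_coef gamma))).
  { rewrite <- (CV_radius_derive_n 2) in Hr. apply CV_radius_inside in Hr.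
    destruct Hr as [l Hl]. exists l. eapply is_series_ext; [|exact Hl].
    intros n. simpl. rewrite pow_n_pow, pow1. unfold scal; simpl. unfold mult; simpl. ring. }
  eapply Rle_trans. 2: apply (Series_le (fun _ => 0)); [intros n; split; [lra| apply Hnn] | exact Hex].
  right. rewrite (Series_ext (fun _ => 0) (fun n => PS_derive_n 2 (xi_coef gamma) n * 0)) by (intros; ring).
  symmetry. rewrite (is_series_unique _ (Series (PS_derive_n 2 (xi_coef gamma)) * 0)). ring.
  apply is_series_scal_r. apply Series_correct, Hex.
Qed.
Definition hh (v : R) : R := v / 4 * sqrt (v ^ 2 - 4) - ln (sqrt (v ^ 2 - 4) / 2 + v / 2).

Lemma sqrt_q (v : R) : sqrt (v ^ 2 / 4 - 1) = sqrt (v ^ 2 - 4) / 2.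
Proof.
  replace (v ^ 2 / 4 - 1) with ((v ^ 2 - 4) / 4) by field.
  destruct (Rle_dec 0 (v^2 - 4)).
  - rewrite sqrt_div by lra. assert (E4 : sqrt 4 = 2) by (replace 4 with (2*2) by ring; apply sqrt_square; lra). rewrite E4. reflexivity.
  - rewrite !sqrt_neg_0; lra.
Qed.

Lemma hh_2 : hh 2 = 0.
Proof.
  unfold hh. replace (2 ^ 2 - 4) with 0 by ring. rewrite sqrt_0.
  replace (0 / 2 + 2 / 2) with 1 by field. rewrite ln_1. ring.
Qed.

Lemma hh_deriv (v : R) : 2 < v -> is_derive hh v (sqrt (v ^ 2 - 4) / 2).
Proof.
  intros Hv. unfold hh.
  assert (Hp : 0 < v ^ 2 - 4) by nra.
  pose proof (sqrt_lt_R0 _ Hp) as Hr.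
  auto_derive.
  - replace (v * (v*1) + - (4)) with (v^2-4) by ring. repeat split; try lra.
  - replace (v * (v*1) + - (4)) with (v^2-4) by ring. set (r := sqrt (v ^ 2 - 4)) in *.
    assert (Hr2 : r * r = v ^ 2 - 4) by (apply sqrt_sqrt; lra).
    field_simplify; try lra.
    assert (Ev : v ^ 2 = r ^ 2 + 4) by nra. clearbody r.
    assert (N : r ^ 3 + r ^ 2 * v + r * v ^ 2 - 4 * r + v ^ 3 - 4 * v = (r/2) * (4 * r ^ 2 + 4 * r * v)).
    { replace (v^3) with (v*v^2) by ring. rewrite Ev. lra. }
    rewrite N. field. nra.
Qed.

Lemma hh_cont (v : R) : 2 <= v -> continuity_pt hh v.
Proof.
  intros Hv. apply continuity_pt_filterlim. change (continuous hh v). unfold hh.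
  apply (continuous_minus (fun v => v/4 * sqrt(v^2-4)) (fun v => ln (sqrt (v ^ 2 - 4) / 2 + v / 2))).
  - apply (continuous_mult (fun v : R => v/4) (fun v => sqrt(v^2-4))).
    + apply (continuous_mult (fun v : R => v) (fun _ => /4)). apply continuous_id. apply continuous_const.
    + apply continuous_sqrt_comp.
      apply (continuous_minus (fun v : R => v^2) (fun _ => 4)); [|apply continuous_const].
      apply (continuous_mult (fun v : R => v) (fun v => v^1)). apply continuous_id.
      apply (continuous_mult (fun v : R => v) (fun v => 1)). apply continuous_id. apply continuous_const.
  - apply (continuous_comp (fun v => sqrt (v ^ 2 - 4) / 2 + v / 2) ln).
    + apply (continuous_plus (fun v => sqrt (v ^ 2 - 4) / 2) (fun v : R => v / 2)).
      * apply (continuous_mult (fun v => sqrt(v^2-4)) (fun _ => /2)); [|apply continuous_const].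
        apply continuous_sqrt_comp.
        apply (continuous_minus (fun v : R => v^2) (fun _ => 4)); [|apply continuous_const].
        apply (continuous_mult (fun v : R => v) (fun v => v^1)). apply continuous_id.
        apply (continuous_mult (fun v : R => v) (fun v => 1)). apply continuous_id. apply continuous_const.
      * apply (continuous_mult (fun v : R => v) (fun _ => /2)). apply continuous_id. apply continuous_const.
    + apply continuous_ln. pose proof (sqrt_pos (v^2-4)). lra.
Qed.

Lemma hh_tan (w z : R) : 2 <= w -> 2 <= z -> hh w + sqrt (w ^ 2 - 4) / 2 * (z - w) <= hh z.
Proof.
  intros Hw Hz.
  destruct (MVT_gen hh w z (fun v => sqrt (v ^ 2 - 4) / 2)) as [c [Hc E]].
  - intros x Hx. apply hh_deriv. pose proof (Rmin_glb_lt w z 2). 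
    assert (2 < x). { eapply Rle_lt_trans; [|apply Hx]. apply Rmin_glb; lra. } lra.
  - intros x Hx. apply hh_cont. eapply Rle_trans; [|apply Hx]. apply Rmin_glb; lra.
  - destruct (Rle_lt_dec w z) as [Hwz|Hwz].
    + rewrite Rmin_left in Hc by lra. rewrite Rmax_right in Hc by lra.
      assert (sqrt (w ^ 2 - 4) <= sqrt (c ^ 2 - 4)) by (apply sqrt_le_1_alt; nra).
      assert (sqrt (w ^ 2 - 4) / 2 * (z - w) <= sqrt (c ^ 2 - 4) / 2 * (z - w)) by nra.
      lra.
    + rewrite Rmin_right in Hc by lra. rewrite Rmax_left in Hc by lra.
      assert (sqrt (c ^ 2 - 4) <= sqrt (w ^ 2 - 4)) by (apply sqrt_le_1_alt; nra).
      assert (sqrt (w ^ 2 - 4) / 2 * (z - w) <= sqrt (c ^ 2 - 4) / 2 * (z - w)) by nra.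
      lra.
Qed.

Definition HH (u : R) : R := if Rle_dec (Rabs u) 2 then 0 else hh (Rabs u).
Definition GG (u : R) : R :=
  if Rle_dec (Rabs u) 2 then 0 else if Rle_dec 0 u then sqrt (u ^ 2 - 4) / 2 else - (sqrt (u ^ 2 - 4) / 2).

Lemma hh_nonneg (z : R) : 2 <= z -> 0 <= hh z.
Proof.
  intros Hz. pose proof (hh_tan 2 z (Rle_refl _) Hz). rewrite hh_2 in H.
  replace (2 ^ 2 - 4) with 0 in H by ring. rewrite sqrt_0 in H. lra.
Qed.

Lemma hh_tan_low (w z : R) : 2 <= w -> z <= 2 -> hh w + sqrt (w ^ 2 - 4) / 2 * (z - w) <= 0.
Proof.
  intros Hw Hz. pose proof (hh_tan w 2 Hw (Rle_refl _)). rewrite hh_2 in H.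
  pose proof (sqrt_pos (w ^ 2 - 4)).
  assert (sqrt (w ^ 2 - 4) / 2 * (z - w) <= sqrt (w ^ 2 - 4) / 2 * (2 - w)) by nra. lra.
Qed.

Lemma HH_nonneg (z : R) : 0 <= HH z.
Proof. unfold HH. destruct Rle_dec. lra. apply hh_nonneg. lra. Qed.

Lemma HH_tan (w z : R) : HH w + GG w * (z - w) <= HH z.
Proof.
  pose proof (HH_nonneg z) as Hz0.
  unfold GG. unfold HH at 1. destruct (Rle_dec (Rabs w) 2) as [Hw|Hw]. lra.
  destruct (Rle_dec 0 w) as [Hw0|Hw0].
  - rewrite Rabs_right in Hw |- * by lra.
    unfold HH. destruct (Rle_dec (Rabs z) 2) as [Hz|Hz].
    + apply hh_tan_low; [lra|]. destruct (Rcase_abs z); [lra|]. rewrite Rabs_right in Hz; lra.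
    + destruct (Rcase_abs z) as [Hzn|Hzp].
      * rewrite Rabs_left in Hz |- * by lra.
        pose proof (hh_tan_low w z). pose proof (hh_nonneg (-z)). lra.
      * rewrite Rabs_right in Hz |- * by lra. apply hh_tan; lra.
  - rewrite Rabs_left in Hw |- * by lra.
    replace (w ^ 2 - 4) with ((- w) ^ 2 - 4) by ring.
    unfold HH. destruct (Rle_dec (Rabs z) 2) as [Hz|Hz].
    + pose proof (hh_tan_low (-w) (-z)). destruct (Rcase_abs z).
      * rewrite Rabs_left in Hz by lra. lra.
      * rewrite Rabs_right in Hz by lra. lra.
    + destruct (Rcase_abs z) as [Hzn|Hzp].
      * rewrite Rabs_left in Hz |- * by lra.
        pose proof (hh_tan (-w) (-z)). lra.
      * rewrite Rabs_right in Hz |- * by lra.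
        pose proof (hh_tan_low (-w) (-z)). pose proof (hh_nonneg z). lra.
Qed.

Lemma HH_conv (t z1 z2 : R) : 0 <= t <= 1 ->
  HH (t * z1 + (1 - t) * z2) <= t * HH z1 + (1 - t) * HH z2.
Proof.
  intros Ht. set (w := t * z1 + (1 - t) * z2).
  pose proof (HH_tan w z1) as H1. pose proof (HH_tan w z2) as H2.
  apply (Rmult_le_compat_l t) in H1; [|lra].
  apply (Rmult_le_compat_l (1 - t)) in H2; [|lra].
  assert (E : t * (HH w + GG w * (z1 - w)) + (1 - t) * (HH w + GG w * (z2 - w)) = HH w)
    by (unfold w; ring).
  lra.
Qed.

Lemma Psi_HH (u : R) : Psi_star u = u ^ 2 / 4 - 1 / 2 - HH u.
Proof.
  unfold Psi_star, HH, hh. destruct (Rle_dec (Rabs u) 2). ring.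
  rewrite pow2_abs, sqrt_q. ring.
Qed.

Lemma Psi_big (M : R) : 0 < M -> M - 1 / 2 <= Psi_star (2 * exp M).
Proof.
  intros HM. set (u := 2 * exp M).
  assert (Hu : 2 < u). { unfold u. pose proof (exp_increasing 0 M HM). rewrite exp_0 in H. lra. }
  rewrite Psi_HH. unfold HH. destruct (Rle_dec (Rabs u) 2) as [H|H].
  { rewrite Rabs_right in H; lra. }
  rewrite Rabs_right by lra. unfold hh.
  set (r := sqrt (u ^ 2 - 4)).
  assert (Hr0 : 0 <= r) by apply sqrt_pos.
  assert (Hr2 : r * r = u ^ 2 - 4) by (apply sqrt_sqrt; nra).
  assert (Hru : r <= u) by nra.
  assert (Hln : M <= ln (r / 2 + u / 2)).
  { replace M with (ln (u / 2)) by (unfold u; replace (2 * exp M / 2) with (exp M) by field; apply ln_exp).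
    apply ln_le; lra. }
  assert (u / 4 * r <= u ^ 2 / 4) by nra.
  lra.
Qed.

Definition Fab (a b x y : R) : R :=
  1 / 2 + 1 / 2 * ln (b / a) - x ^ 2 / 2
  - (y - a * x) ^ 2 / (2 * (b + a - a ^ 2)) + Psi_star (y / sqrt b).

Lemma F_Fab (gamma : nat -> R) (x y : R) : F gamma x y = Fab (xi1 gamma) (xi2 gamma) x y.
Proof. reflexivity. Qed.

Lemma D_pos (a b x0 : R) : 0 < b -> (forall y, Fab a b x0 y <= 0) -> 0 < b + a - a ^ 2.
Proof.
  intros Hb Hup. destruct (Rlt_le_dec 0 (b + a - a ^ 2)) as [|HD]; [assumption|exfalso].
  set (D := b + a - a ^ 2) in *.
  set (C := 1 / 2 + 1 / 2 * ln (b / a) - x0 ^ 2 / 2).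
  set (M := 1 + Rabs C).
  assert (HM : 0 < M) by (unfold M; pose proof (Rabs_pos C); lra).
  set (s := sqrt b). assert (Hs : 0 < s) by (apply sqrt_lt_R0; lra).
  specialize (Hup (s * (2 * exp M))). unfold Fab in Hup. fold D s in Hup.
  replace (s * (2 * exp M) / s) with (2 * exp M) in Hup by (field; lra).
  pose proof (Psi_big M HM).
  assert (Hi : / (2 * D) <= 0).
  { destruct (Req_dec D 0) as [E|E]. rewrite E, Rmult_0_r, Rinv_0. lra.
    left. apply Rinv_lt_0_compat. lra. }
  assert (Hneg : forall q, q ^ 2 / (2 * D) <= 0).
  { intros q. pose proof (pow2_ge_0 q). unfold Rdiv; nra. }
  pose proof (Hneg (s * (2 * exp M) - a * x0)).
  pose proof (Rle_abs C). pose proof (Rle_abs (- C)). rewrite Rabs_Ropp in *.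
  fold C in Hup. unfold M in *. lra.
Qed.

Lemma kappa_pos (a b : R) : 0 < b ->
  ln (b / a) - (b - a) * (b - a + a ^ 2) / (b * a ^ 2) > 0 -> a - a ^ 2 < b.
Proof.
  intros Hb HG. destruct (Rlt_le_dec (a - a ^ 2) b) as [|Hc]; [assumption|exfalso].
  assert (Ha : 0 < a < 1) by (split; nra).
  assert (Hl : ln (b / a) < 0).
  { rewrite <- ln_1. apply ln_increasing. apply Rdiv_lt_0_compat; lra.
    apply (Rmult_lt_reg_r a); [lra|]. unfold Rdiv. rewrite Rmult_assoc, Rinv_l by lra. nra. }
  assert (0 <= (b - a) * (b - a + a ^ 2) / (b * a ^ 2)).
  { pose proof (pow2_ge_0 a).
    assert (H1 : 0 <= a - b) by lra.
    assert (H2 : 0 <= - (b - a + a ^ 2)) by lra.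
    assert (H3 : 0 < b * a ^ 2) by (apply Rmult_lt_0_compat; [lra| apply pow_lt; lra]).
    unfold Rdiv. apply Rmult_le_pos.
    replace ((b - a) * (b - a + a ^ 2)) with ((a - b) * (-(b - a + a ^ 2))) by ring.
    apply Rmult_le_pos; assumption.
    left. apply Rinv_0_lt_compat. exact H3. }
  lra.
Qed.

Lemma strong_conc (a b x0 ys : R) : 0 < b -> 0 < b + a - a ^ 2 -> a - a ^ 2 < b ->
  (forall y, Fab a b x0 y <= 0) -> Fab a b x0 ys = 0 ->
  forall y, Fab a b x0 y <= - ((1 / (2 * (b + a - a ^ 2)) - 1 / (4 * b)) / 2) * (y - ys) ^ 2.
Proof.
  intros Hb HD Hk Hup H0 y.
  set (s := sqrt b). assert (Hs : 0 < s) by (apply sqrt_lt_R0; lra).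
  assert (Hbs : b = s * s) by (symmetry; apply sqrt_sqrt; lra).
  set (m := (y + ys) / 2).
  pose proof (Hup m) as Hm.
  pose proof (HH_conv (1/2) (y / s) (ys / s)) as Hc.
  replace (1 / 2 * (y / s) + (1 - 1 / 2) * (ys / s)) with (m / s) in Hc by (unfold m; field; lra).
  specialize (Hc ltac:(lra)).
  unfold Fab in Hm, H0 |- *. rewrite !Psi_HH in Hm, H0 |- *. fold s in Hm, H0 |- *.
  set (Hy := HH (y / s)) in *. set (Hys := HH (ys / s)) in *. set (Hmm := HH (m / s)) in *.
  set (L := ln (b / a)) in *. clearbody Hy Hys Hmm L.
  unfold m in *. clearbody s. subst b.
  set (D := s * s + a - a ^ 2) in *.
  assert (Key : 
   (1 / 2 + 1 / 2 * L - x0 ^ 2 / 2 - ((y + ys) / 2 - a * x0) ^ 2 / (2 * D) + (((y + ys) / 2 / s) ^ 2 / 4 - 1 / 2 - Hmm))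
   = (1 / 2 + 1 / 2 * L - x0 ^ 2 / 2 - (y - a * x0) ^ 2 / (2 * D) + ((y / s) ^ 2 / 4 - 1 / 2 - Hy)) / 2
   + (1 / 2 + 1 / 2 * L - x0 ^ 2 / 2 - (ys - a * x0) ^ 2 / (2 * D) + ((ys / s) ^ 2 / 4 - 1 / 2 - Hys)) / 2
   + (Hy / 2 + Hys / 2 - Hmm) + (1 / (2 * D) - 1 / (4 * (s * s))) / 4 * (y - ys) ^ 2).
  { unfold D. field. unfold D in HD. split; lra. }
  lra.
Qed.

Lemma Fab_shift (a b x0 x y : R) : 0 < b + a - a ^ 2 ->
  Fab a b x y = Fab a b x0 y
    + (x - x0) * (- x0 + a * (y - a * x0) / (b + a - a ^ 2))
    - (1 / 2 + a ^ 2 / (2 * (b + a - a ^ 2))) * (x - x0) ^ 2.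
Proof. intros HD. unfold Fab. field. lra. Qed.

Lemma main_abs (a b x0 ys : R) : 0 < b -> 0 < b + a - a ^ 2 -> a - a ^ 2 < b ->
  (forall y, Fab a b x0 y <= 0) -> Fab a b x0 ys = 0 ->
  exists alpha beta : R, 0 < alpha /\ 0 < beta /\
  exists eps0 : R, 0 < eps0 /\
  forall eps : R, 0 < eps < eps0 ->
    (forall x y : R, x0 - eps < x < x0 + eps ->
       ~ (ys - alpha * sqrt eps < y < ys + alpha * sqrt eps) ->
       Fab a b x y < 0) /\
    (forall x y : R, x0 - eps < x < x0 + eps ->
       ys - alpha * sqrt eps < y < ys + alpha * sqrt eps ->
       Fab a b x y < beta * sqrt eps).
Proof.
  intros Hb HD Hk Hup H0.
  pose proof (strong_conc a b x0 ys Hb HD Hk Hup H0) as Hsc.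
  set (D := b + a - a ^ 2) in *.
  set (kp := (1 / (2 * D) - 1 / (4 * b)) / 2) in *.
  assert (Hkp : 0 < kp).
  { unfold kp. assert (1 / (4 * b) < 1 / (2 * D)).
    { unfold Rdiv. rewrite !Rmult_1_l. apply Rinv_lt_contravar. nra. unfold D. lra. }
    lra. }
  set (A := Rabs (- x0 + a * (ys - a * x0) / D)).
  set (B := Rabs (a / D)).
  assert (HA : 0 <= A) by apply Rabs_pos.
  assert (HB : 0 <= B) by apply Rabs_pos.
  assert (Hkey : forall eps x y, 0 < eps -> x0 - eps < x < x0 + eps ->
     Fab a b x y <= - kp * Rabs (y - ys) ^ 2 + eps * (A + B * Rabs (y - ys))).
  { intros eps x y He Hx.
    rewrite (Fab_shift a b x0 x y HD). fold D.
    pose proof (Hsc y) as Hy. rewrite <- pow2_abs in Hy.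
    assert (HK : 0 <= (1 / 2 + a ^ 2 / (2 * D)) * (x - x0) ^ 2).
    { apply Rmult_le_pos. assert (0 <= a ^ 2 / (2 * D)).
      { unfold Rdiv. apply Rmult_le_pos. apply pow2_ge_0. left. apply Rinv_0_lt_compat. lra. }
      lra. apply pow2_ge_0. }
    assert (HL : Rabs (- x0 + a * (y - a * x0) / D) <= A + B * Rabs (y - ys)).
    { replace (- x0 + a * (y - a * x0) / D) with ((- x0 + a * (ys - a * x0) / D) + (a / D) * (y - ys))
        by (field; lra).
      eapply Rle_trans. apply Rabs_triang. rewrite Rabs_mult. fold A B. lra. }
    assert (Hh : Rabs (x - x0) <= eps) by (apply Rabs_le; lra).
    assert (Hp : (x - x0) * (- x0 + a * (y - a * x0) / D) <= eps * (A + B * Rabs (y - ys))).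
    { eapply Rle_trans. apply Rle_abs. rewrite Rabs_mult.
      apply Rmult_le_compat; try apply Rabs_pos; assumption. }
    lra. }
  set (alpha := 1 + 2 * A / kp + 2 * B / kp).
  assert (Hal : 1 <= alpha).
  { unfold alpha. assert (0 <= 2 * A / kp) by (unfold Rdiv; apply Rmult_le_pos; [lra| left; apply Rinv_0_lt_compat; lra]).
    assert (0 <= 2 * B / kp) by (unfold Rdiv; apply Rmult_le_pos; [lra| left; apply Rinv_0_lt_compat; lra]).
    lra. }
  set (beta := A + B * alpha + 1).
  assert (Hbe : 0 < beta) by (unfold beta; nra).
  exists alpha, beta. split; [lra|]. split; [exact Hbe|].
  exists 1. split; [lra|].
  intros eps He.
  set (se := sqrt eps).
  assert (Hse0 : 0 < se) by (apply sqrt_lt_R0; lra).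
  assert (Hse2 : se * se = eps) by (apply sqrt_sqrt; lra).
  assert (Hse1 : se < 1) by nra.
  assert (Hese : eps <= se) by nra.
  split.
  - intros x y Hx Hy.
    pose proof (Hkey eps x y ltac:(lra) Hx) as Hk1.
    set (d := Rabs (y - ys)) in *.
    assert (Hd : alpha * se <= d).
    { unfold d. destruct (Rcase_abs (y - ys)).
      - rewrite Rabs_left by lra. destruct (Rle_dec (alpha * se) (- (y - ys))); [lra|].
        exfalso. apply Hy. split; nra.
      - rewrite Rabs_right by lra. destruct (Rle_dec (alpha * se) (y - ys)); [lra|].
        exfalso. apply Hy. split; nra. }
    assert (Hd0 : 0 < d) by nra.
    assert (HaA : 2 * A < kp * alpha).
    { unfold alpha. assert (kp * (1 + 2 * A / kp + 2 * B / kp) = kp + 2 * A + 2 * B) by (field; lra).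
      rewrite H. lra. }
    assert (HaB : 2 * B <= kp * alpha).
    { unfold alpha. assert (kp * (1 + 2 * A / kp + 2 * B / kp) = kp + 2 * A + 2 * B) by (field; lra).
      rewrite H. lra. }
    assert (Hd2 : alpha * alpha * eps <= d * d).
    { rewrite <- Hse2. assert (0 <= alpha * se) by nra. nra. }
    assert (H1 : eps * A < kp / 2 * (d * d)).
    { assert (eps * A * 2 < kp * alpha * eps * alpha).
      { assert (2 * A * eps < kp * alpha * eps) by (apply Rmult_lt_compat_r; lra).
        assert (kp * alpha * eps * 1 <= kp * alpha * eps * alpha) by (apply Rmult_le_compat_l; [|lra]; apply Rmult_le_pos; [apply Rmult_le_pos|]; lra).
        lra. }
      assert (kp * (alpha * alpha * eps) <= kp * (d * d)) by (apply Rmult_le_compat_l; lra).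
      lra. }
    assert (H2 : eps * B * d <= kp / 2 * (d * d)).
    { assert (eps * B * 2 <= kp * d).
      { assert (eps * B * 2 <= kp * alpha * eps) by nra.
        assert (kp * alpha * eps <= kp * alpha * se) by (apply Rmult_le_compat_l; nra).
        assert (kp * alpha * se <= kp * d) by nra. lra. }
      nra. }
    assert (Hdd : d ^ 2 = d * d) by ring.
    rewrite Hdd in Hk1. nra.
  - intros x y Hx Hy.
    pose proof (Hkey eps x y ltac:(lra) Hx) as Hk1.
    set (d := Rabs (y - ys)) in *.
    assert (Hd : d < alpha * se).
    { unfold d. apply Rabs_def1; lra. }
    assert (Hd0 : 0 <= d) by apply Rabs_pos.
    assert (0 <= kp * d ^ 2) by (pose proof (pow2_ge_0 d); nra).
    assert (eps * (A + B * d) <= se * (A + B * alpha)).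
    { assert (eps * (B * d) <= eps * (B * (alpha * se))) by (apply Rmult_le_compat_l; [lra|]; apply Rmult_le_compat_l; lra).
      assert (eps * (B * (alpha * se)) <= se * (B * alpha)).
      { replace (eps * (B * (alpha * se))) with ((eps * se) * (B * alpha)) by ring.
        apply Rmult_le_compat_r; [nra|]. nra. }
      assert (eps * A <= se * A) by nra.
      nra. }
    unfold beta. nra.
Qed.

Theorem lemma3p2 (gamma : nat -> R) (E0 y0 : R) :
  admissible_mixture gamma ->
  genuine_mixture gamma ->
  pure_like gamma ->
  is_E0 gamma E0 ->
  is_y0 gamma E0 y0 ->
  exists alpha beta : R, 0 < alpha /\ 0 < beta /\
  exists eps0 : R, 0 < eps0 /\
  forall eps : R, 0 < eps < eps0 ->
    (forall x y : R, - E0 - eps < x < - E0 + eps ->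
       ~ (- y0 - alpha * sqrt eps < y < - y0 + alpha * sqrt eps) ->
       F gamma x y < 0) /\
    (forall x y : R, - E0 - eps < x < - E0 + eps ->
       - y0 - alpha * sqrt eps < y < - y0 + alpha * sqrt eps ->
       F gamma x y < beta * sqrt eps).
Proof.
  intros Hadm _ Hpl [[Hub Hleast] _] Hy0.
  pose proof (xi2_nonneg gamma Hadm) as Hb0.
  unfold pure_like, G_const in Hpl. cbv zeta in Hpl.
  set (a := xi1 gamma) in *. set (b := xi2 gamma) in *.
  assert (Hb : 0 < b).
  { destruct Hb0 as [|Hb0]; [assumption|exfalso].
    rewrite <- Hb0 in Hpl.
    replace (0 / a) with 0 in Hpl by (unfold Rdiv; ring).
    replace (0 * a ^ 2) with 0 in Hpl by ring.
    unfold Rdiv in Hpl. rewrite Rinv_0, Rmult_0_r in Hpl.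
    unfold ln in Hpl. destruct (Rlt_dec 0 0); lra. }
  assert (Hup : forall y, Fab a b (- E0) y <= 0).
  { intros y. apply Hub. exists y. reflexivity. }
  assert (H0 : Fab a b (- E0) (- y0) = 0).
  { apply Rle_antisym. apply Hup. apply Hleast. intros v [y ->]. apply Hy0. }
  pose proof (D_pos a b (- E0) Hb Hup) as HD.
  pose proof (kappa_pos a b Hb Hpl) as Hk.
  destruct (main_abs a b (- E0) (- y0) Hb HD Hk Hup H0)
    as [al [be [Hal [Hbe [e0 [He0 Hall]]]]]].
  exists al, be. split; [exact Hal|]. split; [exact Hbe|].
  exists e0. split; [exact He0|].
  intros eps He. destruct (Hall eps He) as [P1 P2]. split.
  - intros x y Hx Hy. rewrite F_Fab. apply P1; assumption.
  - intros x y Hx Hy. rewrite F_Fab. apply P2; assumption.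
Qed.
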